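(* Let $(K_i)_{i\in I}$ be a family of nonempty compact Hausdorff spaces each having the regular extension property, and let $K$ be the Alexandroff compactification of their topological sum $\bigsqcup_{i\in I}K_i$. Then $K$ has the regular extension property. (That is, the class of compact Hausdorff spaces with the regular extension property is closed under taking Alexandroff compactifications of arbitrary topological sums.)
   Context: The Alexandroff compactification of a locally compact Hausdorff space $X$ is $X$ itself if $X$ is compact, and its one-point compactification $X\cup\{\infty\}$ otherwise. $C(K)$ is the Banach space of real-valued continuous functions on $K$ with the supremum norm and $\mathbf 1_K$ its unit. For a closed $F\subseteq K$, an extension operator for $F$ in $K$ is a bounded linear map $E:C(F)\to C(K)$ with $E(f)|_F=f$ for all $f$; it is regular if $\|E\|\le 1$ and $E(\mathbf 1_F)=\mathbf 1_K$. $K$ has the regular extension property if every nonempty closed subset admits a regular extension operator in $K$. *)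

(* Defs.v *)
From HB Require Import structures.
From mathcomp Require Import all_boot all_order all_algebra.
From mathcomp Require Import all_classical all_reals.
From mathcomp Require Import all_analysis topology_theory.sigT_topology
  topology_theory.subtype_topology topology_theory.one_point_compactification.

Set Implicit Arguments.
Unset Strict Implicit.
Unset Printing Implicit Defensive.
Import Order.TTheory GRing.Theory Num.Theory.
Local Open Scope classical_set_scope.
Local Open Scope ring_scope.

(* C(F) is represented by the continuous real functions on the subspace type
   [set_type F] (notation: F coerced to a type, with the initial = subspace
   topology); C(K) by continuous functions K -> R.  An extension operator is
   given by a map E on functions; only its values on continuous functions
   matter. *)
Definition regular_extension_operator (R : realType) (K : topologicalType)
    (F : set K) (E : (set_type F -> R) -> (K -> R)) : Prop :=
  (forall f : set_type F -> R, continuous (f : set_type F -> R^o) -> continuous (E f : K -> R^o)) /\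
  (forall (a : R) (f g : set_type F -> R), continuous (f : set_type F -> R^o) -> continuous (g : set_type F -> R^o) ->
     E (fun y => a * f y + g y) = (fun x => a * E f x + E g x)) /\
  (forall f : set_type F -> R, continuous (f : set_type F -> R^o) -> forall y : set_type F, E f (set_val y) = f y) /\
  (forall f : set_type F -> R, continuous (f : set_type F -> R^o) -> forall M : R,
     (forall y : set_type F, `|f y| <= M) -> forall x : K, `|E f x| <= M) /\
  E (fun _ => 1) = (fun _ => 1).

Definition has_regular_extension_property (R : realType) (K : topologicalType)
  : Prop :=
  forall F : set K, closed F -> F !=set0 ->
    exists E : (set_type F -> R) -> (K -> R), regular_extension_operator E.

(* The Alexandroff compactification of X is X if X is compact and the
   one-point compactification otherwise; "P holds of the Alexandroff
   compactification of X" is expressed by the case split. *)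
Definition alexandroff_has (X : topologicalType)
    (P : topologicalType -> Prop) : Prop :=
  (compact [set: X] -> P X) /\
  (~ compact [set: X] -> P (one_point_compactification X)).

(* Main.v *)
Require Import Defs.
From HB Require Import structures.
From mathcomp Require Import all_boot all_order all_algebra.
From mathcomp Require Import all_classical all_reals.
From mathcomp Require Import all_analysis topology_theory.sigT_topology
  topology_theory.subtype_topology topology_theory.one_point_compactification.
From mathcomp Require Import finmap lra.
Set Implicit Arguments.
Unset Strict Implicit.
Unset Printing Implicit Defensive.
Import Order.TTheory GRing.Theory Num.Theory.
Local Open Scope classical_set_scope.
Local Open Scope ring_scope.

Definition pt_of {T : topologicalType} (x : T) : Type := T.
HB.instance Definition _ (T : topologicalType) (x : T) :=
  Topological.copy (pt_of x) T.
HB.instance Definition _ (T : topologicalType) (x : T) :=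
  isPointed.Build (pt_of x) x.

Lemma compact_cover_any (T : topologicalType) (A : set T) :
  compact A -> cover_compact A.
Proof.
move=> cA I D f fo cov.
have [->|/set0P [x0 _]] := eqVneq A set0.
  exists fset0; [by move=> ?; rewrite inE | by move=> ? []].
have : @compact (pt_of x0) A by [].
rewrite (@compact_cover (pt_of x0)); apply => //.
Qed.

Section Comp.
Context {I : choiceType} {K : I -> topologicalType}.
Local Notation X := {i : I & K i}.

Definition comp (i : I) : set X := existT K i @` setT.

Lemma comp_compact i : compact [set: K i] -> compact (comp i).
Proof.
move=> c; apply: continuous_compact => //.
exact/continuous_subspaceT/existT_continuous.
Qed.

Lemma comp_closed i : closed (comp i).
Proof.
rewrite -[comp i]setCK closedC sigT_openP => j.
have [->|nij] := eqVneq j i.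
  rewrite (_ : _ @^-1` _ = set0); first exact: open0.
  by apply/seteqP; split => // w /=; apply; exists w.
rewrite (_ : _ @^-1` _ = setT); first exact: openT.
apply/seteqP; split => // w _ /= [v _ /(congr1 (@projT1 _ _))/= eij].
by move: nij; rewrite eij eqxx.
Qed.

Lemma saturate (C : set X) : compact C -> (forall i, compact [set: K i]) ->
  exists C' : set X, [/\ compact C', closed C' &
    forall i w w', C (existT K i w) -> C' (existT K i w')].
Proof.
move=> cC cK; have {}cC := compact_cover_any cC.
have [D' _ cov] : finite_subset_cover setT comp C.
  apply: cC => [i _|[i w] _]; first exact: existT_open_map openT.
  by exists i => //; exists w.
exists (\big[setU/set0]_(i <- D') comp i); split.
- by apply: bigsetU_compact => i _; exact: comp_compact.
- by apply: closed_bigsetU => i _; exact: comp_closed.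
move=> i w w' /cov [j D'j [v _ /[dup] e /(congr1 (@projT1 _ _))/= eji]].
rewrite -bigcup_fset; exists i; last by exists w'.
by rewrite /= -eji.
Qed.
End Comp.

Unset Implicit Arguments.

Section Gen.
Context {R : realType} {I : choiceType} {K : I -> topologicalType}.
Local Notation X := {i : I & K i}.
Context {P : topologicalType} (j : X -> P) (F : set P).

Definition Fi (i : I) : set (K i) := [set z | F (j (existT K i z))].

Definition ri i (z : set_type (Fi i)) : set_type F :=
  exist _ (j (existT K i (sval z))) (svalP z).

Lemma ri_cont i : continuous j -> continuous (ri i).
Proof.
move=> cj; apply: (@continuous_comp_initial _ _ _ set_val).
have -> : set_val \o ri i = j \o existT K i \o set_val by [].
move=> z; apply: continuous_comp; last exact: cj.
exact: (@initial_continuous _ _ set_val).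
Qed.

Lemma Fi_closed i : continuous j -> closed F -> closed (Fi i).
Proof.
move=> cj cF; have -> : Fi i = (j \o existT K i) @^-1` F by [].
apply: preimage_closed => // z _; apply: continuous_comp; last exact: cj.
exact: existT_continuous.
Qed.

Definition EI (Krep : forall i, has_regular_extension_property R (K i))
  (p0 : set_type F) (f : set_type F -> R) (i : I) : K i -> R :=
  match pselect (closed (Fi i) /\ Fi i !=set0) with
  | left h => proj1_sig (cid (Krep i (Fi i) (proj1 h) (proj2 h))) (f \o ri i)
  | right _ => fun _ => f p0
  end.

Definition G Krep p0 f : X -> R := fun x => EI Krep p0 f (projT1 x) (projT2 x).

Context (Krep : forall i, has_regular_extension_property R (K i)) (p0 : set_type F).
Context (cj : continuous j) (cF : closed F).

Lemma G_cont f : continuous (f : set_type F -> R^o) ->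
  continuous (G Krep p0 f : X -> R^o).
Proof.
move=> cf; apply: sigT_continuous => i; rewrite /EI.
case: pselect => [h|_]; last exact: cst_continuous.
case: cid => E [Ec _] /=; apply: Ec.
move=> z; apply: continuous_comp; last exact: cf.
exact: ri_cont.
Qed.

Lemma G_lin (a : R) f g : continuous (f : set_type F -> R^o) ->
  continuous (g : set_type F -> R^o) ->
  G Krep p0 (fun y => a * f y + g y) = (fun x => a * G Krep p0 f x + G Krep p0 g x).
Proof.
move=> cf cg; apply/funext => -[i z]; rewrite /G /EI /=.
case: pselect => [h|_] //; case: cid => E [_ [El _]] /=.
have cfr : continuous ((f \o ri i) : _ -> R^o).
  by move=> w; apply: continuous_comp; [exact: ri_cont|exact: cf].
have cgr : continuous ((g \o ri i) : _ -> R^o).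
  by move=> w; apply: continuous_comp; [exact: ri_cont|exact: cg].
by have := El a _ _ cfr cgr => /(congr1 (fun h => h z)) /= <-.
Qed.

Lemma G_ext f (y : set_type F) i z : continuous (f : set_type F -> R^o) ->
  set_val y = j (existT K i z) -> G Krep p0 f (existT K i z) = f y.
Proof.
move=> cf yE; rewrite /G /EI /=.
have Fz : Fi i z by rewrite /Fi /= -yE; exact: set_valP.
case: pselect => [h|]; last first.
  by case; split; [exact: Fi_closed|exists z].
case: cid => E [_ [_ [Ee _]]] /=.
have cfr : continuous ((f \o ri i) : _ -> R^o).
  by move=> w; apply: continuous_comp; [exact: ri_cont|exact: cf].
rewrite (Ee _ cfr (exist _ z (mem_set Fz))) /=; congr f.
by apply: val_inj => /=; rewrite -yE.
Qed.

Lemma G_bound f M : continuous (f : set_type F -> R^o) ->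
  (forall y, `|f y| <= M) -> forall x, `|G Krep p0 f x| <= M.
Proof.
move=> cf fM [i z]; rewrite /G /EI /=.
case: pselect => [h|_] //; case: cid => E [_ [_ [_ [Eb _]]]] /=.
have cfr : continuous ((f \o ri i) : _ -> R^o).
  by move=> w; apply: continuous_comp; [exact: ri_cont|exact: cf].
by apply: Eb => // w; exact: fM.
Qed.

Lemma G_one : G Krep p0 (fun _ => 1) = (fun _ => 1).
Proof.
apply/funext => -[i z]; rewrite /G /EI /=.
case: pselect => [h|_] //; case: cid => E [_ [_ [_ [_ E1]]]] /=.
by rewrite E1.
Qed.

Lemma G_empty f i z : ~ (Fi i !=set0) -> G Krep p0 f (existT K i z) = f p0.
Proof.
move=> ne; rewrite /G /EI /=; case: pselect => [h|//].
by case: ne; exact: h.2.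
Qed.

Lemma G_near f (d e : R) i z : continuous (f : set_type F -> R^o) ->
  (forall w : set_type (Fi i), `|f (ri i w) - d| <= e) ->
  Fi i !=set0 -> `|G Krep p0 f (existT K i z) - d| <= e.
Proof.
move=> cf fd ne; rewrite /G /EI /=.
case: pselect => [h|]; last by case; split => //; exact: Fi_closed.
case: cid => E [Ec [El [_ [Eb E1]]]] /=.
have cfr : continuous ((f \o ri i) : _ -> R^o).
  by move=> w; apply: continuous_comp; [exact: ri_cont|exact: cf].
have c1 : continuous ((fun _ => 1) : set_type (Fi i) -> R^o).
  by move=> w; exact: cst_continuous.
have := El (- d) _ _ c1 cfr; rewrite E1 => /(congr1 (fun g => g z)) /=.
move=> eq; have -> : E (f \o ri i) z - d = - d * 1 + E (f \o ri i) z.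
  by rewrite mulr1 addrC.
rewrite -eq; apply: Eb.
  move=> w; exact: (cvgD (cvg_cst _) (cfr w)).
by move=> w; rewrite mulr1 addrC; exact: fd.
Qed.
End Gen.

Theorem proposition3p12 (R : realType) (I : choiceType)
  (K : I -> topologicalType)
  (Kne : forall i, [set: K i] !=set0)
  (Kcpt : forall i, compact [set: K i])
  (Khaus : forall i, hausdorff_space (K i))
  (Krep : forall i, has_regular_extension_property R (K i)) :
  alexandroff_has {i : I & K i} (has_regular_extension_property R).
Proof.
split.
- move=> _ F cF [x0 Fx0].
  pose p0 : set_type F := exist _ x0 (mem_set Fx0).
  have cid' : continuous (@id {i : I & K i}) by move=> x U.
  exists (@G R I K _ id F Krep p0); split; [|split; [|split; [|split]]].
  + by move=> f cf; exact: G_cont.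
  + by move=> a f g cf cg; exact: G_lin.
  + move=> f cf y; case E : (set_val y) => [i z].
    by apply: G_ext.
  + by move=> f cf M fM; exact: G_bound.
  + exact: G_one.
- move=> _ F cF [x0 Fx0].
  pose q : set_type F := exist _ x0 (mem_set Fx0).
  pose p0 : set_type F := match pselect (F None) with
    | left h => exist _ None (mem_set h) | right _ => q end.
  have p0N : F None -> set_val p0 = None by rewrite /p0; case: pselect.
  have cS : continuous (Some : {i : I & K i} -> one_point_compactification {i : I & K i}).
    exact: one_point_compactification_some_continuous.
  pose GG := @G R I K (one_point_compactification {i : I & K i}) Some F Krep p0.
  exists (fun f p => match p with Some x => GG f x | None => f p0 end).
  split; [|split; [|split; [|split]]].
  + move=> f cf [x|]. 
      exact: (G_cont _ _ _ _ cS f cf x).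
    apply/(@cvgrPdist_lt _ _ _ _ (nbhs_filter (None : one_point_compactification {i : I & K i}))) => e e0 /=.
    have key : forall C : set {i : I & K i}, compact C ->
        (forall i z, (forall w, ~ C (existT K i w)) ->
           `|f p0 - GG f (existT K i z)| < e) ->
        \forall t \near nbhs (None : one_point_compactification {i : I & K i}),
          `|f p0 - match t with Some x => GG f x | None => f p0 end| < e.
      move=> C cC hC; have [C' [cC' clC' satC]] := saturate cC Kcpt.
      exists C'; first by split.
      move=> t [[[i z] nC'x <-]|->] /=; last by rewrite subrr normr0.
      apply: hC => w Cw; apply: nC'x; exact: satC Cw.
    have e2 : 0 < e / 2 by rewrite divr_gt0.
    have [hN|hN] := pselect (F None).
    - have := cf p0; move/(@cvgrPdist_lt _ _ _ _ (nbhs_filter p0)) => /(_ _ e2).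
      rewrite nbhsE => -[B [[A oA AB] Bp0] Bsub].
      have AN : A None by rewrite -(p0N hN); move: Bp0; rewrite -AB.
      have : nbhs (None : one_point_compactification {i : I & K i}) A.
        exact: open_nbhs_nbhs.
      case=> C [cC _] CA; apply: (key C cC) => i z hw.
      have [ne|ne] := pselect (Fi (P:=one_point_compactification {i : I & K i}) Some F i !=set0); last first.
        by rewrite /GG G_empty // subrr normr0.
      have h : `|GG f (existT K i z) - f p0| <= e / 2.
        apply: (@G_near R I K (one_point_compactification {i : I & K i}) Some F Krep p0 cS cF f (f p0) (e / 2) i z cf) => // w.
        rewrite distrC; apply: ltW; apply: Bsub; rewrite -AB /=.
        by apply: CA; left; exists (existT K i (sval w)) => //; exact: hw.
      by rewrite distrC; apply: le_lt_trans h _; lra.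
    - have : nbhs (None : one_point_compactification {i : I & K i}) (~` F).
        by apply: open_nbhs_nbhs; split => //; exact: closed_openC.
      case=> C [cC _] CA; apply: (key C cC) => i z hw.
      rewrite /GG G_empty ?subrr ?normr0 // => -[w Fw].
      by apply: (CA (Some (existT K i w))) => //; left; exists (existT K i w) => //; exact: hw.
  + move=> a f g cf cg; apply/funext => -[x|] //.
    by rewrite /GG (G_lin _ _ _ _ cS a f g cf cg).
  + move=> f cf y; case E : (set_val y) => [[i z]|].
      by apply: G_ext.
    congr f; apply: val_inj; rewrite /= -[sval y]/(set_val y) E.
    by apply: p0N; rewrite -E; exact: set_valP.
  + move=> f cf M fM [x|] //.
    exact: (G_bound _ _ _ _ cS f M cf fM).
  + by apply/funext => -[x|] //; rewrite /GG G_one.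
Qed.
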